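(* Let $\mathcal{A}$ be a complex unital structurable algebra of type $(2,1)$. Then $\mathcal{A}$ is isomorphic (as an algebra with involution) to the universal unital algebra ${\rm A}_1$ of type $(2,1)$, or to one of the following algebras with basis $\{e_1,e_2,e_3\}$, unit $e_1$, involution given by $\overline{e_1}=e_1$, $\overline{e_2}=e_2$, $\overline{e_3}=-e_3$, and multiplication table (besides $e_1e_i=e_ie_1=e_i$; all unlisted products of basis elements are zero): \begin{itemize} \item ${\rm A}_2$: $e_3e_3=e_2$; \item ${\rm A}_3$: $e_2e_2=e_2$; \item ${\rm A}_4$: $e_2e_2=e_2$, $e_3e_3=-e_1+e_2$; \item ${\rm A}_5$: $e_2e_3=e_2$, $e_3e_2=-e_2$, $e_3e_3=e_1$. \end{itemize}
   Context: An involution on an algebra $\mathcal{A}$ is a linear map $x\mapsto\overline{x}$ with $\overline{\overline{x}}=x$ and $\overline{xy}=\overline{y}\,\overline{x}$. For a unital algebra with involution write $\mathcal{A}=\mathcal{H}\oplus\mathcal{S}$ with $\mathcal{H}=\{a:\overline a=a\}$, $\mathcal{S}=\{a:\overline a=-a\}$; $\mathcal{A}$ is of type $(k,n-k)$ if $\dim\mathcal{A}=n$ and $\dim\mathcal{H}=k$. For $x,y\in\mathcal{A}$ define $V_{x,y}(z)=(x\overline{y})z+(z\overline{y})x-(z\overline{x})y$ and $T_x(z)=xz+zx-z\overline{x}$ (so $T_x=V_{x,1}$). A unital algebra with involution is structurable if $T_zV_{x,y}-V_{x,y}T_z=V_{T_z(x),y}-V_{x,T_{\overline z}(y)}$ for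 all $x,y,z$. An isomorphism of algebras with involution is a linear bijection $\varphi$ with $\varphi(xy)=\varphi(x)\varphi(y)$ and $\varphi(\overline x)=\overline{\varphi(x)}$. The universal unital algebra of type $(2,1)$ is the $3$-dimensional algebra with basis $e_1,e_2,e_3$, whose only nonzero products of basis elements are $e_1e_i=e_ie_1=e_i$, with involution $\overline{e_1}=e_1$, $\overline{e_2}=e_2$, $\overline{e_3}=-e_3$. *)

(* Defs.v *)
From HB Require Import structures.
From mathcomp Require Import all_boot all_order all_algebra.
From mathcomp Require Import reals complex.
Set Implicit Arguments. Unset Strict Implicit. Unset Printing Implicit Defensive.
Import Order.TTheory GRing.Theory Num.Theory.
Local Open Scope ring_scope.

Section AlgebraWithInvolution.
Variable (K : fieldType) (V : vectType K).
Variable (mul : V -> V -> V) (bar : 'End(V)).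

Definition bilinear_mul : Prop :=
  (forall (a : K) (x y z : V), mul (a *: x + y) z = a *: mul x z + mul y z) /\
  (forall (a : K) (x y z : V), mul z (a *: x + y) = a *: mul z x + mul z y).

Definition unital : Prop :=
  exists one : V, forall x, mul one x = x /\ mul x one = x.

(* bar is an involution: linear (as an element of 'End(V)), of order 2,
   and an anti-automorphism *)
Definition is_involution : Prop :=
  (forall x, bar (bar x) = x) /\ (forall x y, bar (mul x y) = mul (bar y) (bar x)).

Definition herm_space : {vspace V} := lker (bar - \1)%VF.

(* type (k, n-k) *)
Definition of_type (n k : nat) : Prop :=
  \dim {:V} = n /\ \dim herm_space = k.

Definition Vop (x y : V) (z : V) : V :=
  mul (mul x (bar y)) z + mul (mul z (bar y)) x - mul (mul z (bar x)) y.

Definition Top (x : V) (z : V) : V := mul x z + mul z x - mul z (bar x).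

(* T_z V_{x,y} - V_{x,y} T_z = V_{T_z(x),y} - V_{x,T_{bar z}(y)},
   as operators, evaluated at an arbitrary w *)
Definition structurable : Prop :=
  forall x y z w : V,
    Top z (Vop x y w) - Vop x y (Top z w)
    = Vop (Top z x) y w - Vop x (Top (bar z) y) w.

End AlgebraWithInvolution.

(* The model algebras A_1, ..., A_5 on K^3 = 'rV[K]_3, basis e_1,e_2,e_3
   being delta_mx 0 0, delta_mx 0 1, delta_mx 0 2 (indices shifted by one). *)
Section Models.
Variable K : fieldType.

Definition eb (i : 'I_3) : 'rV[K]_3 := delta_mx 0 i.

Definition tabA (k : nat) (i j : 'I_3) : 'rV[K]_3 :=
  if (i : nat) == 0%N then eb j
  else if (j : nat) == 0%N then eb i
  else match k, (i : nat), (j : nat) with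
  | 2%N, 2%N, 2%N => eb (inord 1)
  | 3%N, 1%N, 1%N => eb (inord 1)
  | 4%N, 1%N, 1%N => eb (inord 1)
  | 4%N, 2%N, 2%N => - eb (inord 0) + eb (inord 1)
  | 5%N, 1%N, 2%N => eb (inord 1)
  | 5%N, 2%N, 1%N => - eb (inord 1)
  | 5%N, 2%N, 2%N => eb (inord 0)
  | _, _, _ => 0
  end.

Definition mulA (k : nat) (u v : 'rV[K]_3) : 'rV[K]_3 :=
  \sum_(i < 3) \sum_(j < 3) (u 0 i * v 0 j) *: tabA k i j.

Definition barA (u : 'rV[K]_3) : 'rV[K]_3 :=
  \row_i (if (i : nat) == 2%N then - u 0 i else u 0 i).

End Models.

Definition iso_to_model (K : fieldType) (V : vectType K)
  (mul : V -> V -> V) (bar : 'End(V)) (k : nat) : Prop :=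
  exists phi : V -> 'rV[K]_3,
    [/\ linear phi, bijective phi,
        forall x y, phi (mul x y) = mulA k (phi x) (phi y) &
        forall x, phi (bar x) = barA (phi x)].

(* Main.v *)
Require Import Defs.
From HB Require Import structures.
From mathcomp Require Import all_boot all_order all_algebra.
From mathcomp Require Import reals complex.
From mathcomp Require Import ring.
Require Import Defs.
Set Implicit Arguments. Unset Strict Implicit. Unset Printing Implicit Defensive.
Import Order.TTheory GRing.Theory Num.Theory.
Local Open Scope ring_scope.
Local Open Scope complex_scope.

Definition row3 (K : fieldType) (a b c : K) : 'rV[K]_3 := \row_(j < 3) [:: a; b; c]`_j.


Lemma mulA1 (K : fieldType) (a1 b1 c1 a2 b2 c2 : K) :
  mulA 1 (row3 a1 b1 c1) (row3 a2 b2 c2) = row3 (a1 * a2) (a1 * b2 + b1 * a2) (a1 * c2 + c1 * a2).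
Proof.
apply/rowP => j; rewrite /mulA !summxE !big_ord_recl !big_ord0 /= /tabA /eb /= !mxE /=.
by case: j => [[|[|[|//]]] Hj] /=; rewrite -?val_eqE /= ?inordK //=; ring.
Qed.

Lemma mulA2 (K : fieldType) (a1 b1 c1 a2 b2 c2 : K) :
  mulA 2 (row3 a1 b1 c1) (row3 a2 b2 c2) = row3 (a1 * a2) (a1 * b2 + b1 * a2 + c1 * c2) (a1 * c2 + c1 * a2).
Proof.
apply/rowP => j; rewrite /mulA !summxE !big_ord_recl !big_ord0 /= /tabA /eb /= !mxE /=.
by case: j => [[|[|[|//]]] Hj] /=; rewrite -?val_eqE /= ?inordK //=; ring.
Qed.

Lemma mulA3 (K : fieldType) (a1 b1 c1 a2 b2 c2 : K) :
  mulA 3 (row3 a1 b1 c1) (row3 a2 b2 c2) = row3 (a1 * a2) (a1 * b2 + b1 * a2 + b1 * b2) (a1 * c2 + c1 * a2).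
Proof.
apply/rowP => j; rewrite /mulA !summxE !big_ord_recl !big_ord0 /= /tabA /eb /= !mxE /=.
by case: j => [[|[|[|//]]] Hj] /=; rewrite -?val_eqE /= ?inordK //=; ring.
Qed.

Lemma mulA4 (K : fieldType) (a1 b1 c1 a2 b2 c2 : K) :
  mulA 4 (row3 a1 b1 c1) (row3 a2 b2 c2) = row3 (a1 * a2 - c1 * c2) (a1 * b2 + b1 * a2 + b1 * b2 + c1 * c2) (a1 * c2 + c1 * a2).
Proof.
apply/rowP => j; rewrite /mulA !summxE !big_ord_recl !big_ord0 /= /tabA /eb /= !mxE /=.
by case: j => [[|[|[|//]]] Hj] /=; rewrite -?val_eqE /= ?inordK //=; ring.
Qed.

Lemma mulA5 (K : fieldType) (a1 b1 c1 a2 b2 c2 : K) :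
  mulA 5 (row3 a1 b1 c1) (row3 a2 b2 c2) = row3 (a1 * a2 + c1 * c2) (a1 * b2 + b1 * a2 + b1 * c2 - c1 * b2) (a1 * c2 + c1 * a2).
Proof.
apply/rowP => j; rewrite /mulA !summxE !big_ord_recl !big_ord0 /= /tabA /eb /= !mxE /=.
by case: j => [[|[|[|//]]] Hj] /=; rewrite -?val_eqE /= ?inordK //=; ring.
Qed.

Definition i0 : 'I_3 := @Ordinal 3 0 isT.
Definition i1 : 'I_3 := @Ordinal 3 1 isT.
Definition i2 : 'I_3 := @Ordinal 3 2 isT.

Section Core.
Variables (R : realType) (V : vectType R[i]) (mul : V -> V -> V) (bar : 'End(V)).
Local Notation C := (R[i]).
Hypothesis Hbil : (forall (a : C) (x y z : V), mul (a *: x + y) z = a *: mul x z + mul y z) /\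
  (forall (a : C) (x y z : V), mul z (a *: x + y) = a *: mul z x + mul z y).

Lemma mul0l z : mul 0 z = 0.
Proof.
have H := Hbil.1 1 0 0 z; rewrite !scale1r addr0 in H.
symmetry; apply: (@addrI _ (mul 0 z)); by rewrite addr0 -H.
Qed.
Lemma mul0r z : mul z 0 = 0.
Proof.
have H := Hbil.2 1 0 0 z; rewrite !scale1r addr0 in H.
symmetry; apply: (@addrI _ (mul z 0)); by rewrite addr0 -H.
Qed.
Lemma mulDl x y z : mul (x + y) z = mul x z + mul y z.
Proof. by have := Hbil.1 1 x y z; rewrite !scale1r. Qed.
Lemma mulDr x y z : mul z (x + y) = mul z x + mul z y.
Proof. by have := Hbil.2 1 x y z; rewrite !scale1r. Qed.
Lemma mulZl k x z : mul (k *: x) z = k *: mul x z.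
Proof. by have := Hbil.1 k x 0 z; rewrite !addr0 mul0l addr0. Qed.
Lemma mulZr k x z : mul z (k *: x) = k *: mul z x.
Proof. by have := Hbil.2 k x 0 z; rewrite !addr0 mul0r addr0. Qed.

Variables one h s : V.
Hypothesis Hone : forall x, mul one x = x /\ mul x one = x.
Definition X : 3.-tuple V := [tuple one; h; s].
Hypothesis Hfree : free X.
Hypothesis Hspan : forall x : V, x \in <<X>>%VS.
Definition cmb_def (a b c : C) := a *: one + b *: h + c *: s.
Fact cmb_key : unit. Proof. by []. Qed.
Definition cmb := locked_with cmb_key cmb_def.
Lemma cmbE : cmb = cmb_def. Proof. exact: unlock. Qed.

Lemma coord_one i : coord X i one = [:: 1; 0; 0]`_i.
Proof. have := @coord_free _ _ 3 X i0 i Hfree => /= ->.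
by case: i => [[|[|[|//]]] Hi]. Qed.
Lemma coord_h i : coord X i h = [:: 0; 1; 0]`_i.
Proof. have := @coord_free _ _ 3 X i1 i Hfree => /= ->.
by case: i => [[|[|[|//]]] Hi]. Qed.
Lemma coord_s i : coord X i s = [:: 0; 0; 1]`_i.
Proof. have := @coord_free _ _ 3 X i2 i Hfree => /= ->.
by case: i => [[|[|[|//]]] Hi]. Qed.

Lemma coord_cmb a b c i : coord X i (cmb a b c) = [:: a; b; c]`_i.
Proof.
rewrite cmbE /cmb_def !linearD !linearZ /= coord_one coord_h coord_s.
by case: i => [[|[|[|//]]] Hi] /=; ring.
Qed.

Lemma cmb_congr a b c a' b' c' : a = a' -> b = b' -> c = c' -> cmb a b c = cmb a' b' c'.
Proof. by move=> -> -> ->. Qed.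

Lemma cmb_inj a b c a' b' c' : cmb a b c = cmb a' b' c' -> [/\ a = a', b = b' & c = c'].
Proof.
move=> E; split.
- by have := coord_cmb a b c i0; rewrite E coord_cmb.
- by have := coord_cmb a b c i1; rewrite E coord_cmb.
- by have := coord_cmb a b c i2; rewrite E coord_cmb.
Qed.

Lemma cmb_coord x : x = cmb (coord X i0 x) (coord X i1 x) (coord X i2 x).
Proof.
rewrite {1}(coord_span (Hspan x)) !big_ord_recl big_ord0 addr0 cmbE /cmb_def addrA.
have -> : lift ord0 (lift ord0 ord0) = i2 :> 'I_3 by apply: val_inj.
have -> : lift ord0 ord0 = i1 :> 'I_3 by apply: val_inj.
have -> : ord0 = i0 by apply: val_inj.
by [].
Qed.

Lemma eq_coord x y : (forall i, coord X i x = coord X i y) -> x = y.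
Proof. by move=> H; rewrite (cmb_coord x) (cmb_coord y) !H. Qed.

Lemma add_cmb a b c a' b' c' : cmb a b c + cmb a' b' c' = cmb (a + a') (b + b') (c + c').
Proof. apply: eq_coord => i; rewrite linearD /= !coord_cmb. by case: i => [[|[|[|//]]] Hi]. Qed.
Lemma sub_cmb a b c a' b' c' : cmb a b c - cmb a' b' c' = cmb (a - a') (b - b') (c - c').
Proof. apply: eq_coord => i; rewrite linearB /= !coord_cmb. by case: i => [[|[|[|//]]] Hi]. Qed.
Lemma scale_cmb k a b c : k *: cmb a b c = cmb (k * a) (k * b) (k * c).
Proof. apply: eq_coord => i; rewrite linearZ /= !coord_cmb. by case: i => [[|[|[|//]]] Hi]. Qed.

Hypotheses (Hbo : bar one = one) (Hbh : bar h = h) (Hbs : bar s = - s).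
Lemma bar_cmb a b c : bar (cmb a b c) = cmb a b (- c).
Proof. by rewrite cmbE /cmb_def !linearD !linearZ /= Hbo Hbh Hbs scalerN scaleNr. Qed.

Hypothesis Hanti : forall x y, bar (mul x y) = mul (bar y) (bar x).

Lemma herm_coord x : bar x = x -> coord X i2 x = 0.
Proof.
move=> E.
have E2 := bar_cmb (coord X i0 x) (coord X i1 x) (coord X i2 x).
rewrite -cmb_coord E {1}(cmb_coord x) in E2.
case/cmb_inj: E2 => _ _ /eqP E3.
by move: E3; rewrite -addr_eq0 -mulr2n mulrn_eq0 /= => /eqP.
Qed.

Lemma mulNl x y : mul (- x) y = - mul x y.
Proof. by rewrite -scaleN1r mulZl scaleN1r. Qed.
Lemma mulNr x y : mul y (- x) = - mul y x.
Proof. by rewrite -scaleN1r mulZr scaleN1r. Qed.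

Definition a := coord X i0 (mul h h).
Definition b := coord X i1 (mul h h).
Definition p := coord X i0 (mul s s).
Definition q := coord X i1 (mul s s).
Definition u := coord X i0 (mul h s).
Definition v := coord X i1 (mul h s).
Definition w := coord X i2 (mul h s).

Lemma Hhh : mul h h = cmb a b 0.
Proof.
by rewrite {1}(cmb_coord (mul h h)) herm_coord // Hanti Hbh.
Qed.
Lemma Hss : mul s s = cmb p q 0.
Proof.
by rewrite {1}(cmb_coord (mul s s)) herm_coord // Hanti Hbs mulNl mulNr opprK.
Qed.
Lemma Hhs : mul h s = cmb u v w.
Proof. exact: cmb_coord. Qed.
Lemma Hsh : mul s h = cmb (- u) (- v) w.
Proof.
have E : bar (mul h s) = - mul s h by rewrite Hanti Hbs Hbh mulNl.
rewrite -[mul s h]opprK -E Hhs bar_cmb -scaleN1r scale_cmb.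
by apply: cmb_congr; rewrite ?mulN1r ?opprK.
Qed.

Lemma mul_cmb a1 b1 c1 a2 b2 c2 : mul (cmb a1 b1 c1) (cmb a2 b2 c2) =
  cmb (a1 * a2 + b1 * b2 * a + c1 * c2 * p + (b1 * c2 - c1 * b2) * u)
      (a1 * b2 + b1 * a2 + b1 * b2 * b + c1 * c2 * q + (b1 * c2 - c1 * b2) * v)
      (a1 * c2 + c1 * a2 + (b1 * c2 + c1 * b2) * w).
Proof.
rewrite {1}cmbE /cmb_def !mulDl !mulZl (Hone _).1 cmbE /cmb_def !mulDr !mulZr !(Hone _).2 Hhh Hss Hhs Hsh.
apply: eq_coord => i.
rewrite !linearD !linearZ /= ?coord_cmb !coord_one !coord_h !coord_s.
rewrite /GRing.scale /=.
by case: i => [[|[|[|//]]] Hi] /=; ring.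
Qed.



Definition pr (x y : C * C * C) : C * C * C :=
  let: (a1, b1, c1) := x in let: (a2, b2, c2) := y in
  (a1 * a2 + b1 * b2 * a + c1 * c2 * p + (b1 * c2 - c1 * b2) * u,
   a1 * b2 + b1 * a2 + b1 * b2 * b + c1 * c2 * q + (b1 * c2 - c1 * b2) * v,
   a1 * c2 + c1 * a2 + (b1 * c2 + c1 * b2) * w).
Definition addT (x y : C * C * C) : C * C * C :=
  let: (a1, b1, c1) := x in let: (a2, b2, c2) := y in (a1 + a2, b1 + b2, c1 + c2).
Definition subT (x y : C * C * C) : C * C * C :=
  let: (a1, b1, c1) := x in let: (a2, b2, c2) := y in (a1 - a2, b1 - b2, c1 - c2).
Definition barT (x : C * C * C) : C * C * C := let: (a1, b1, c1) := x in (a1, b1, - c1).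
Definition cmbT (x : C * C * C) := let: (a1, b1, c1) := x in cmb a1 b1 c1.
Definition TopT x z := subT (addT (pr x z) (pr z x)) (pr z (barT x)).
Definition VopT x y z := subT (addT (pr (pr x (barT y)) z) (pr (pr z (barT y)) x)) (pr (pr z (barT x)) y).

Lemma mul_cmbT x y : mul (cmbT x) (cmbT y) = cmbT (pr x y).
Proof. by case: x => [[??]?]; case: y => [[??]?]; rewrite /= mul_cmb. Qed.
Lemma add_cmbT x y : cmbT x + cmbT y = cmbT (addT x y).
Proof. by case: x => [[??]?]; case: y => [[??]?]; rewrite /= add_cmb. Qed.
Lemma sub_cmbT x y : cmbT x - cmbT y = cmbT (subT x y).
Proof. by case: x => [[??]?]; case: y => [[??]?]; rewrite /= sub_cmb. Qed.
Lemma bar_cmbT x : bar (cmbT x) = cmbT (barT x).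
Proof. by case: x => [[??]?]; rewrite /= bar_cmb. Qed.
Lemma Top_cmbT x z : Top mul bar (cmbT x) (cmbT z) = cmbT (TopT x z).
Proof. by rewrite /Top /TopT !bar_cmbT !mul_cmbT add_cmbT sub_cmbT. Qed.
Lemma Vop_cmbT x y z : Vop mul bar (cmbT x) (cmbT y) (cmbT z) = cmbT (VopT x y z).
Proof. by rewrite /Vop /VopT !bar_cmbT !mul_cmbT add_cmbT sub_cmbT. Qed.
Lemma cmbT_inj x y : cmbT x = cmbT y -> x = y.
Proof. by case: x => [[??]?]; case: y => [[??]?] /= /cmb_inj [-> -> ->]. Qed.

Hypothesis Hstr : structurable mul bar.

Lemma strT x y z t :
  subT (TopT z (VopT x y t)) (VopT x y (TopT z t)) =
  subT (VopT (TopT z x) y t) (VopT x (TopT (barT z) y) t).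
Proof.
apply: cmbT_inj; have := Hstr (cmbT x) (cmbT y) (cmbT z) (cmbT t).
by do 4 rewrite ?bar_cmbT ?Top_cmbT ?Vop_cmbT ?sub_cmbT.
Qed.

Lemma from_eq (k P Q T : C) : k != 0 -> P = Q -> P - Q = k * T -> T = 0.
Proof. move=> k0 PQ; rewrite PQ subrr => /esym /eqP; rewrite mulf_eq0 (negbTE k0) => /eqP. done. Qed.

Ltac nz := by rewrite ?oppr_eq0 ?pnatr_eq0 ?oner_eq0.

Lemma eqs1 : 2*u - 6*v*w + 4*b*v = 0 /\ w^+2 - a - b*w = 0.
Proof.
have := strT (1,0,0) (0,0,1) (0,1,0) (0,1,0).
cbv beta iota delta [TopT VopT subT addT pr barT].
move: a b p q u v w => a b p q u v w [_ E1 E2].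
split.
  by apply: (from_eq (k := 1) _ E1); [nz | ring].
by apply: (from_eq (k := -4) _ E2); [nz | ring].
Qed.


Lemma eqs2 : p + b*q - q*w - v^+2 = 0 /\ u + v*w = 0.
Proof.
have := strT (1,0,0) (0,0,1) (0,1,0) (0,0,1).
cbv beta iota delta [TopT VopT subT addT pr barT].
move: a b p q u v w => a b p q u v w [_ E1 E2].
split.
  by apply: (from_eq (k := -2) _ E1); [nz | ring].
by apply: (from_eq (k := 4) _ E2); [nz | ring].
Qed.

Lemma eqs3 : q * u = 0 /\ q * v = 0.
Proof.
have := strT (0,0,1) (0,0,1) (0,0,1) (1,0,0).
cbv beta iota delta [TopT VopT subT addT pr barT].
move: a b p q u v w => a b p q u v w [E1 E2 _].
split.
  by apply: (from_eq (k := 8) _ E1); [nz | ring].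
by apply: (from_eq (k := 8) _ E2); [nz | ring].
Qed.


Definition phiT (al be t : C) (x : C*C*C) : 'rV[C]_3 :=
  let: (a1, b1, c1) := x in row3 (a1 - b1 * al / be) (b1 / be) (c1 / t).

Lemma iso_gen k al be t : be != 0 -> t != 0 ->
  (forall x y, phiT al be t (pr x y) = mulA k (phiT al be t x) (phiT al be t y)) ->
  iso_to_model mul bar k.
Proof.
move=> be0 t0 Hm.
pose crd x : C*C*C := (coord X i0 x, coord X i1 x, coord X i2 x).
have Hc x : x = cmbT (crd x) by exact: cmb_coord.
have Hcc y : crd (cmbT y) = y by case: y => [[??]?]; rewrite /crd /= !coord_cmb.
exists (fun x => phiT al be t (crd x)); split.
- move=> k0 x y; apply/rowP => j; rewrite /crd /phiT !mxE !linearP /GRing.scale /=.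
  by case: j => [[|[|[|//]]] Hj] /=; field.
- exists (fun r : 'rV[C]_3 => cmb (r 0 i0 + r 0 i1 * al) (r 0 i1 * be) (r 0 i2 * t)).
    move=> x; rewrite [RHS](Hc x); case: (crd x) => [[a1 b1] c1]; rewrite /phiT /cmbT !mxE /=.
    by apply: cmb_congr; field.
  move=> r; have -> : cmb (r 0 i0 + r 0 i1 * al) (r 0 i1 * be) (r 0 i2 * t) = cmbT (r 0 i0 + r 0 i1 * al, r 0 i1 * be, r 0 i2 * t) by [].
  rewrite Hcc; apply/rowP => j; rewrite !mxE.
  by case: j => [[|[|[|//]]] Hj] /=; [rewrite (_ : Ordinal Hj = i0); last exact: val_inj | rewrite (_ : Ordinal Hj = i1); last exact: val_inj | rewrite (_ : Ordinal Hj = i2); last exact: val_inj]; field.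
- by move=> x y; rewrite {1}(Hc x) {1}(Hc y) mul_cmbT Hcc Hm.
- move=> x; rewrite {1}(Hc x) bar_cmbT Hcc; case: (crd x) => [[a1 b1] c1].
  apply/rowP => j; rewrite /barA /= !mxE.
  by case: j => [[|[|[|//]]] Hj] /=; rewrite ?mxE /=; field.
Qed.


Lemma from_eq' (k P Q L M : C) : k != 0 -> P = Q -> P - Q = k * (L - M) -> L = M.
Proof. move=> k0 PQ E; apply/eqP; rewrite -subr_eq0; apply/eqP; exact: (from_eq k0 PQ E). Qed.

Ltac sfield := field; rewrite ?oner_eq0 ?pnatr_eq0 ?oppr_eq0 ?invr_eq0 //.

Lemma classify : exists2 k : nat, (1 <= k <= 5)%N & iso_to_model mul bar k.
Proof.
have [E1a E1b] := eqs1; have [E2a E2b] := eqs2; have [E3a E3b] := eqs3.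
have Hu : u = - (v * w) by apply/eqP; rewrite -addr_eq0 E2b.
have Hvd : v * (2 * w - b) = 0.
  by apply: (from_eq (k := -4) _ E1a); [nz | rewrite Hu; ring].
have Ha : a = w ^+ 2 - b * w by apply: (from_eq' (k := -1) _ E1b); [nz | ring].
have Hp : p = v ^+ 2 + q * w - b * q by apply: (from_eq' (k := 1) _ E2a); [nz | ring].
case: (eqVneq (2 * w - b) 0) => [Hd | Hd].
- have Hw : w = b / 2 by apply: (from_eq' (k := 2) _ Hd); [nz | field; nz].
  case: (eqVneq v 0) => [Hv | Hv].
  + case: (eqVneq q 0) => [Hq | Hq].
    * exists 1%N => //; apply: (iso_gen (al := - b / 2) (be := 1) (t := 1)); [nz | nz |].
      move=> [[x1 y1] z1] [[x2 y2] z2]; rewrite /phiT /pr /= mulA1.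
      rewrite Ha Hp Hu Hw Hv Hq; congr row3; sfield.
    * exists 2%N => //; apply: (iso_gen (al := - q * b / 2) (be := q) (t := 1)); [by [] | nz |].
      move=> [[x1 y1] z1] [[x2 y2] z2]; rewrite /phiT /pr /= mulA2.
      rewrite Ha Hp Hu Hw Hv; congr row3; sfield.
  + have Hq : q = 0 by move/eqP: E3b; rewrite mulf_eq0 (negbTE Hv) orbF => /eqP.
    exists 5%N => //; apply: (iso_gen (al := - b / 2) (be := 1) (t := v^-1)); [nz | by rewrite invr_eq0 |].
    move=> [[x1 y1] z1] [[x2 y2] z2]; rewrite /phiT /pr /= mulA5.
    rewrite Ha Hp Hu Hw Hq; congr row3; sfield.
- have Hv : v = 0 by move/eqP: Hvd; rewrite mulf_eq0 (negbTE Hd) orbF => /eqP.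
  have [d d0 Hw] : exists2 d : C, d != 0 & w = (d + b) / 2.
    by exists (2 * w - b) => //; field; nz.
  case: (eqVneq q 0) => [Hq | Hq].
  * exists 3%N => //; apply: (iso_gen (al := (1 + b / d) / 2) (be := - d^-1) (t := 1)); [by rewrite oppr_eq0 invr_eq0 | nz |].
    move=> [[x1 y1] z1] [[x2 y2] z2]; rewrite /phiT /pr /= mulA3.
    rewrite Ha Hp Hu Hv Hq Hw; congr row3; sfield.
  * pose r := sqrtC (- (q * d)).
    have Hr : r ^+ 2 = - (q * d) by exact: sqrtCK.
    have r0 : r != 0.
      apply/negP => /eqP r0; move: Hr; rewrite r0 expr0n /= => /eqP.
      by rewrite eq_sym oppr_eq0 mulf_eq0 (negbTE Hq) (negbTE d0).
    have Hq' : q = - (r ^+ 2) / d by rewrite Hr; field.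
    exists 4%N => //; apply: (iso_gen (al := (1 + b / d) / 2) (be := - d^-1) (t := r^-1)); [by rewrite oppr_eq0 invr_eq0 | by rewrite invr_eq0 |].
    move=> [[x1 y1] z1] [[x2 y2] z2]; rewrite /phiT /pr /= mulA4.
    by rewrite Ha Hp Hu Hv Hq' Hw; congr row3; field; rewrite ?r0 ?d0.
Qed.

End Core.

Lemma zmod_aux (Z : zmodType) (A B C : Z) : (A + (B + C)) - (A + (B - C)) = C + C.
Proof. by rewrite opprD opprB addrACA subrr add0r (addrC B C) addrCA addrK. Qed.

Unset Implicit Arguments.
Set Strict Implicit.

Theorem mainTheorem1 (R : realType) (V : vectType R[i])
  (mul : V -> V -> V) (bar : 'End(V)) :
  bilinear_mul mul -> unital mul -> is_involution mul bar ->
  of_type bar 3 2 -> structurable mul bar ->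
  exists2 k : nat, (1 <= k <= 5)%N & iso_to_model mul bar k.
Proof.
move=> Hbil [one Hone] [Hbb Hanti] [Hdim Hherm] Hstr.
have Hbo : bar one = one.
  have H1 x : mul (bar one) x = x.
    by rewrite -{2}(Hbb x) -(Hone (bar x)).2 Hanti Hbb.
  by rewrite -(Hone (bar one)).2 H1.
have [H memH Hherm'] : exists2 H : {vspace V}, (forall x, (x \in H) = (bar x == x)) & \dim H = 2%N.
  exists (herm_space bar) => // x.
  by rewrite memv_ker add_lfunE opp_lfunE id_lfunE subr_eq0.
have [S memS] : exists S : {vspace V}, forall x, (x \in S) = (bar x == - x).
  exists (lker (bar + \1)%VF) => x.
  by rewrite memv_ker add_lfunE id_lfunE addr_eq0.
clear Hherm.
have two0 : (2 : R[i]) != 0 by rewrite pnatr_eq0.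
have full : (H + S)%VS = fullv.
  apply/eqP; rewrite eqEsubv subvf /=; apply/subvP => x _.
  have -> : x = (2^-1 *: (x + bar x)) + (2^-1 *: (x - bar x)).
    rewrite -scalerDr addrACA subrr addr0 scalerDr -scalerDl (_ : 2^-1 + 2^-1 = 1) ?scale1r //.
    by field.
  apply: memv_add; [rewrite memH | rewrite memS]; rewrite !linearZ /=.
    by rewrite linearD /= Hbb addrC.
  by rewrite linearB /= Hbb opprB.
have dimS : (0 < \dim S)%N.
  have := (dimv_add_leqif H S).1; rewrite full Hdim Hherm'.
  by case: (\dim S).
have S0 : S != 0%VS by rewrite -dimv_eq0 -lt0n.
pose s := vpick S.
have s0 : s != 0 by rewrite vpick0.
have Hbs : bar s = - s by apply/eqP; rewrite -memS memv_pick.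
have : ~~ all (fun x => x \in <[one]>%VS) (vbasis H).
  apply/negP => /allP Hall.
  have : (H <= <[one]>)%VS.
    rewrite -(span_basis (vbasisP H)); apply/span_subvP => x /Hall. done.
  by move/dimvS; rewrite Hherm' dim_vline; case: (_ != 0).
case/allPn => h hB hn.
have Hbh : bar h = h by apply/eqP; rewrite -memH (vbasis_mem hB).
have one0 : one != 0.
  apply/eqP => E; move/eqP: s0; apply; by rewrite -(Hone s).1 E mul0l.
have Hfree : free (X one h s).
  apply/freeP => k Hk.
  rewrite !big_ord_recl big_ord0 addr0 /= in Hk.
  have e2 : lift ord0 (lift ord0 ord0) = i2 :> 'I_3 by apply: val_inj.
  have e1 : lift ord0 ord0 = i1 :> 'I_3 by apply: val_inj.
  have e0 : ord0 = i0 :> 'I_3 by apply: val_inj.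
  rewrite e2 e1 e0 in Hk.
  have HkB : k i0 *: one + (k i1 *: h - k i2 *: s) = 0.
    by have := congr1 bar Hk; rewrite linear0 !linearD !linearZ /= Hbo Hbh Hbs scalerN.
  have K2 : k i2 = 0.
    have := zmod_aux (k i0 *: one) (k i1 *: h) (k i2 *: s).
    rewrite Hk HkB subrr -scalerDl => /esym /eqP; rewrite scaler_eq0 (negbTE s0) orbF.
    by rewrite -mulr2n mulrn_eq0 /= => /eqP.
  rewrite K2 scale0r addr0 in Hk.
  have K1 : k i1 = 0.
    case: (eqVneq (k i1) 0) => // K1; exfalso; move/negP: hn; apply.
    have -> : h = (k i1)^-1 *: (- (k i0 *: one)).
      by rewrite -[X in - X](addrK (k i1 *: h)) Hk sub0r opprK scalerA mulVf ?scale1r.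
    by rewrite memvZ // memvN memvZ // memv_line.
  rewrite K1 scale0r addr0 in Hk.
  have K0 : k i0 = 0 by move/eqP: Hk; rewrite scaler_eq0 (negbTE one0) orbF => /eqP.
  case => [[|[|[|//]]] Hi].
  - by rewrite (_ : Ordinal Hi = i0) //; apply: val_inj.
  - by rewrite (_ : Ordinal Hi = i1) //; apply: val_inj.
  - by rewrite (_ : Ordinal Hi = i2) //; apply: val_inj.
have Hspan x : x \in <<X one h s>>%VS.
  have : (<<X one h s>> == fullv)%VS.
    by rewrite -(dimv_leqif_eq (subvf _)).2 (eqP Hfree) Hdim.
  by move/eqP => ->; exact: memvf.
exact: (classify Hbil Hone Hfree Hspan Hbo Hbh Hbs Hanti Hstr).
Qed.
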